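(* Let $R$ be an integral domain, $A$ a unital $R$-algebra with involution $i$, and $(\Lambda,\ge)$ a finite partially ordered set. Then $A$ has a cell datum (with respect to $i$) whose partially ordered set is $\Lambda$ if and only if $A$ has a $\Lambda$-cell net.
   Context: An involution of an $R$-algebra is an $R$-linear algebra anti-automorphism $i$ with $i^2=\mathrm{id}$. A cell datum for a unital $R$-algebra $A$ with involution $i$ consists of a finite partially ordered set $(\Lambda,\ge)$, finite sets $\mathcal T(\lambda)$ ($\lambda\in\Lambda$), and elements $c^\lambda_{s,t}\in A$ ($s,t\in\mathcal T(\lambda)$) such that: (i) they form an $R$-basis of $A$; (ii) if $\breve A^\lambda$ denotes the $R$-span of all $c^\mu_{u,v}$ with $\mu>\lambda$, then for all $\lambda$, $s\in\mathcal T(\lambda)$, $a\in A$ there are $r^s_v(a)\in R$ with $a\,c^\lambda_{s,t}\equiv\sum_v r^s_v(a)c^\lambda_{v,t}\pmod{\breve A^\lambda}$ for every $t\in\mathcal T(\lambda)$; (iii) $i(c^\lambda_{s,t})\equiv c^\lambda_{t,s}\pmod{\breve A^\lambda}$. For a left $A$-module $M$, $i(M)=\{i(m):m\in M\}$ is the right $A$-module which is a copy of $M$ as an $R$-module with $i(m)a=i(i(a)m)$. On $M\otimes_Ri(M)$ (an $A$-$A$-bimodule) the map $i$ is the $R$-linear map $x\otimes i(y)\mapsto y\otimes i(x)$. An order ideal of $\Lambda$ is a subset $\Gamma$ such that $\lambda\in\Gamma$, $\mu\ge\lambda$ imply $\mu\in\Gamma$; write $\Gamma_{\ge\lambda}=\{\mu:\mu\ge\lambda\}$,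 $\Gamma_{>\lambda}=\{\mu:\mu>\lambda\}$. A $\Lambda$-cell net is a map $\Gamma\mapsto A_\Gamma$ from order ideals of $\Lambda$ to $i$-invariant two-sided ideals of $A$ such that: (1) $A_\emptyset=0$ and $\Gamma_1\subseteq\Gamma_2\Rightarrow A_{\Gamma_1}\subseteq A_{\Gamma_2}$; (2) writing $A_{\ge\lambda}=A_{\Gamma_{\ge\lambda}}$ and $A_{>\lambda}=A_{\Gamma_{>\lambda}}$, $A$ is the span of $\{A_{\ge\mu}:\mu\in\Lambda\}$ and $A_{>\lambda}$ is the span of $\{A_{\ge\mu}:\mu>\lambda\}$ for every $\lambda$; (3) for each $\lambda\in\Lambda$ there is a left $A$-module $M^\lambda$, finitely generated and free over $R$, such that whenever $\Gamma\subseteq\Gamma'$ are order ideals with $\Gamma'\setminus\Gamma=\{\lambda\}$ there is an $A$-$A$-bimodule isomorphism $\alpha:A_{\Gamma'}/A_\Gamma\to M^\lambda\otimes_Ri(M^\lambda)$ with $i\circ\alpha=\alpha\circ i$. *)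

(* Defs.v *)
From HB Require Import structures.
From mathcomp Require Import all_boot all_order all_algebra.
Set Implicit Arguments. Unset Strict Implicit. Unset Printing Implicit Defensive.
Import Order.TTheory GRing.Theory Num.Theory.
Local Open Scope ring_scope.

Section CellDefs.
Variables (R : idomainType) (A : algType R).

Definition is_involution (i : A -> A) : Prop :=
  [/\ (forall (r : R) (x y : A), i (r *: x + y) = r *: i x + i y),
      (forall x y : A, i (x * y) = i y * i x) &
      (forall x : A, i (i x) = x)].

Definition in_span (S : A -> Prop) (x : A) : Prop :=
  exists (n : nat) (c : 'I_n -> R) (v : 'I_n -> A),
    (forall j, S (v j)) /\ x = \sum_(j < n) c j *: v j.

Definition is_basis (I : finType) (b : I -> A) : Prop :=
  (forall x : A, exists r : I -> R, x = \sum_(k : I) r k *: b k) /\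
  (forall r : I -> R, \sum_(k : I) r k *: b k = 0 -> forall k, r k = 0).

Definition is_cell_datum (i : A -> A) (d : Order.disp_t) (L : finPOrderType d)
    (T : L -> finType) (c : forall l : L, T l -> T l -> A) : Prop :=
  let breve (l : L) : A -> Prop :=
      in_span (fun x => exists (m : L) (u v : T m), (l < m)%O /\ x = c m u v) in
  [/\ is_basis (fun k : {l : L & (T l * T l)%type} =>
                  c (projT1 k) (projT2 k).1 (projT2 k).2),
      (forall (l : L) (s : T l) (a : A), exists r : T l -> R,
          forall t : T l, breve l (a * c l s t - \sum_(v : T l) r v *: c l v t)) &
      (forall (l : L) (s t : T l), breve l (i (c l s t) - c l t s))].

Definition has_cell_datum (i : A -> A) (d : Order.disp_t) (L : finPOrderType d)
  : Prop :=
  exists (T : L -> finType) (c : forall l : L, T l -> T l -> A),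
    is_cell_datum i c.

Definition is_inv_ideal (i : A -> A) (I : A -> Prop) : Prop :=
  [/\ I 0,
      (forall x y, I x -> I y -> I (x + y)),
      (forall (r : R) x, I x -> I (r *: x)),
      (forall a x, I x -> I (a * x) /\ I (x * a)) &
      (forall x, I x -> I (i x))].

Definition order_ideal (d : Order.disp_t) (L : finPOrderType d) (G : {set L})
  : Prop := forall l m : L, l \in G -> (l <= m)%O -> m \in G.

(** A left A-module, finitely generated and free over R, of rank n:
    modelled as R^n (column vectors) with A acting through an algebra
    homomorphism rho : A -> 'M[R]_n. *)
Definition is_rep (n : nat) (rho : A -> 'M[R]_n) : Prop :=
  [/\ (forall (r : R) (x y : A), rho (r *: x + y) = r *: rho x + rho y),
      (forall x y : A, rho (x * y) = rho x *m rho y) &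
      rho 1 = 1%:M].

(** An A-A-bimodule isomorphism alpha : I'/I -> M (x)_R i(M) commuting with
    i, where M = R^n with action rho.  M (x)_R i(M) is identified with
    'M[R]_n via x (x) i(y) |-> x *m y^T; then the left action is
    X |-> rho a *m X, the right action is X |-> X *m (rho (i a))^T and
    the map i is transposition.  The isomorphism on the quotient is
    given by a map f defined on I' which is R-linear there, surjective
    onto 'M_n, has kernel exactly I, and is compatible with the actions. *)
Definition quotient_iso (i : A -> A) (I I' : A -> Prop) (n : nat)
    (rho : A -> 'M[R]_n) (f : A -> 'M[R]_n) : Prop :=
  [/\ (forall (r : R) x y, I' x -> I' y -> f (r *: x + y) = r *: f x + f y),
      (forall X : 'M[R]_n, exists2 x, I' x & f x = X),
      (forall x, I' x -> (f x = 0 <-> I x)),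
      (forall a x, I' x -> f (a * x) = rho a *m f x /\
                           f (x * a) = f x *m (rho (i a))^T) &
      (forall x, I' x -> f (i x) = (f x)^T)].

Definition is_cell_net (i : A -> A) (d : Order.disp_t) (L : finPOrderType d)
    (net : {set L} -> A -> Prop) : Prop :=
  let ge (l : L) := net [set m : L | (l <= m)%O] in
  let gt (l : L) := net [set m : L | (l < m)%O] in
  [/\ (forall G, order_ideal G -> is_inv_ideal i (net G)),
      (forall x, net set0 x <-> x = 0) /\
      (forall G1 G2, order_ideal G1 -> order_ideal G2 -> G1 \subset G2 ->
          forall x, net G1 x -> net G2 x),
      (forall x : A, in_span (fun y => exists m : L, ge m y) x),
      (forall (l : L) (x : A),
          gt l x <-> in_span (fun y => exists2 m : L, (l < m)%O & ge m y) x) &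
      (forall l : L, exists (n : nat) (rho : A -> 'M[R]_n), is_rep rho /\
          forall G G', order_ideal G -> order_ideal G' -> G \subset G' ->
            G' :\: G = [set l] ->
            exists f : A -> 'M[R]_n, quotient_iso i (net G) (net G') rho f)].

Definition has_cell_net (i : A -> A) (d : Order.disp_t) (L : finPOrderType d)
  : Prop := exists net : {set L} -> A -> Prop, is_cell_net i net.

End CellDefs.

(* Main.v *)
Require Import Defs.
From HB Require Import structures.
From mathcomp Require Import all_boot all_order all_algebra.
Import Order.TTheory GRing.Theory Num.Theory.
Local Open Scope ring_scope.
From Stdlib Require Import IndefiniteDescription.
Set Implicit Arguments. Unset Strict Implicit. Unset Printing Implicit Defensive.

Set Implicit Arguments. Unset Strict Implicit. Unset Printing Implicit Defensive.
Import Order.TTheory GRing.Theory Num.Theory.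
Local Open Scope ring_scope.

Section Span.
Variables (R : idomainType) (A : algType R).

Lemma span_ind (S Q : A -> Prop) :
  Q 0 -> (forall r x y, Q x -> Q y -> Q (r *: x + y)) ->
  (forall x, S x -> Q x) -> forall x, in_span S x -> Q x.
Proof.
move=> Q0 Ql QS x [n [c [v [Sv ->]]]].
apply: (big_ind Q) => //.
- by move=> x1 y1 Qx Qy; have := Ql 1 x1 y1 Qx Qy; rewrite scale1r.
- by move=> j; have := Ql (c j) (v j) 0 (QS _ (Sv j)) Q0; rewrite addr0.
Qed.

Lemma span_sub (S : A -> Prop) x : S x -> in_span S x.
Proof.
move=> Sx; exists 1%N, (fun _ => 1), (fun _ => x); split => //.
by rewrite big_ord1 scale1r.
Qed.

Lemma span0 (S : A -> Prop) : in_span S 0.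
Proof. exists 0%N, (fun _ => 0), (fun _ => 0); split; [by case | by rewrite big_ord0]. Qed.

Lemma span_lin (S : A -> Prop) r x y :
  in_span S x -> in_span S y -> in_span S (r *: x + y).
Proof.
move=> [n [c [v [Sv ->]]]] [m [c' [v' [Sv' ->]]]].
exists (n + m)%N, (fun j => match split j with inl a => r * c a | inr b => c' b end),
  (fun j => match split j with inl a => v a | inr b => v' b end); split.
  by move=> j; case: split.
rewrite big_split_ord /= scaler_sumr; congr (_ + _); apply: eq_bigr => j _.
  by rewrite -[lshift m j]/(unsplit (inl _ j)) unsplitK scalerA.
by rewrite -[rshift n j]/(unsplit (inr _ j)) unsplitK.
Qed.

Lemma spanD (S : A -> Prop) x y : in_span S x -> in_span S y -> in_span S (x + y).
Proof. by move=> *; rewrite -[x]scale1r; apply: span_lin. Qed.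

Lemma spanZ (S : A -> Prop) r x : in_span S x -> in_span S (r *: x).
Proof. by move=> *; rewrite -[_ *: _]addr0; apply: span_lin => //; apply: span0. Qed.

Lemma spanN (S : A -> Prop) x : in_span S x -> in_span S (- x).
Proof. by move=> *; rewrite -scaleN1r; apply: spanZ. Qed.

Lemma spanB (S : A -> Prop) x y : in_span S x -> in_span S y -> in_span S (x - y).
Proof. by move=> *; apply: spanD => //; apply: spanN. Qed.

Lemma span_sum (S : A -> Prop) (I : finType) (P : pred I) (F : I -> A) :
  (forall j, P j -> in_span S (F j)) -> in_span S (\sum_(j | P j) F j).
Proof. by move=> H; apply: big_ind => //; [apply: span0 | apply: spanD]. Qed.

Lemma span_span (S S' : A -> Prop) x :
  (forall y, S y -> in_span S' y) -> in_span S x -> in_span S' x.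
Proof. by move=> H; apply: span_ind => //; [apply: span0 | move=> *; apply: span_lin]. Qed.

End Span.

Set Implicit Arguments. Unset Strict Implicit. Unset Printing Implicit Defensive.
Import Order.TTheory GRing.Theory Num.Theory.
Local Open Scope ring_scope.

Section Inv.
Variables (R : idomainType) (A : algType R) (i : A -> A) (hi : is_involution i).
Lemma inv_lin r x y : i (r *: x + y) = r *: i x + i y. Proof. by case: hi. Qed.
Lemma inv_mul x y : i (x * y) = i y * i x. Proof. by case: hi. Qed.
Lemma invK x : i (i x) = x. Proof. by case: hi. Qed.
Lemma inv0 : i 0 = 0.
Proof. have h := inv_lin 1 0 0; rewrite scale1r addr0 scale1r in h.
by apply: (@addrI _ (i 0)); rewrite addr0 -h. Qed.
Lemma invD x y : i (x + y) = i x + i y. Proof. by have := inv_lin 1 x y; rewrite !scale1r. Qed.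
Lemma invZ r x : i (r *: x) = r *: i x. Proof. by have := inv_lin r x 0; rewrite inv0 !addr0. Qed.
Lemma invN x : i (- x) = - i x. Proof. by rewrite -scaleN1r invZ scaleN1r. Qed.
Lemma invB x y : i (x - y) = i x - i y. Proof. by rewrite invD invN. Qed.
Lemma inv_sum (I : finType) (P : pred I) (F : I -> A) :
  i (\sum_(j | P j) F j) = \sum_(j | P j) i (F j).
Proof. by apply: (big_morph i invD inv0). Qed.
End Inv.

Unset Implicit Arguments.
Section Dir1.
Variables (R : idomainType) (A : algType R) (i : A -> A) (hi : is_involution i)
  (d : Order.disp_t) (L : finPOrderType d) (T : L -> finType)
  (c : forall l : L, T l -> T l -> A) (hc : is_cell_datum i c).
Set Implicit Arguments.

Definition TT (l : L) := (T l * T l)%type.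
Definition KK := {l : L & (T l * T l)%type}.
Definition bb (k : KK) : A := c (projT1 k) (projT2 k).1 (projT2 k).2.

Lemma hb : is_basis bb. Proof. by case: hc. Qed.

Lemma coord_ex x : exists r : {ffun KK -> R}, x == \sum_k r k *: bb k.
Proof.
have [r ->] := hb.1 x; exists (finfun r); apply/eqP.
by apply: eq_bigr => k _; rewrite ffunE.
Qed.

Definition coord x : {ffun KK -> R} := xchoose (coord_ex x).

Lemma coordE x : x = \sum_k coord x k *: bb k.
Proof. exact/eqP/(xchooseP (coord_ex x)). Qed.

Lemma coord_uniq (r : KK -> R) x : x = \sum_k r k *: bb k -> forall k, coord x k = r k.
Proof.
move=> Ex k; apply/eqP; rewrite -subr_eq0; apply/eqP; move: k; apply: (hb.2 (fun k => coord x k - r k)).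
under eq_bigr do rewrite scalerBl.
by rewrite sumrB -coordE -Ex subrr.
Qed.

Lemma coord_lin a x y k : coord (a *: x + y) k = a * coord x k + coord y k.
Proof.
apply: (@coord_uniq (fun k => a * coord x k + coord y k)); rewrite {1}(coordE x) {1}(coordE y) scaler_sumr -big_split /=.
by apply: eq_bigr => j _; rewrite scalerDl scalerA.
Qed.

Lemma coord0 k : coord 0 k = 0.
Proof. have h := coord_lin 1 0 0 k; rewrite scale1r addr0 mul1r in h.
by apply: (@addrI _ (coord 0 k)); rewrite addr0 -h. Qed.
Lemma coordD x y k : coord (x + y) k = coord x k + coord y k.
Proof. by have := coord_lin 1 x y k; rewrite scale1r mul1r. Qed.
Lemma coordZ a x k : coord (a *: x) k = a * coord x k.
Proof. by have := coord_lin a x 0 k; rewrite addr0 coord0 addr0. Qed.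
Lemma coordN x k : coord (- x) k = - coord x k.
Proof. by rewrite -scaleN1r coordZ mulN1r. Qed.
Lemma coordB x y k : coord (x - y) k = coord x k - coord y k.
Proof. by rewrite coordD coordN. Qed.
Lemma coord_sum (I : finType) (P : pred I) (F : I -> A) k :
  coord (\sum_(j | P j) F j) k = \sum_(j | P j) coord (F j) k.
Proof. by apply: (big_morph (fun x => coord x k) (fun x y => coordD x y k) (coord0 k)). Qed.

Lemma coord_b k k' : coord (bb k) k' = (k == k')%:R.
Proof.
apply: (@coord_uniq (fun k' => (k == k')%:R)); rewrite (bigD1 k) //= eqxx scale1r big1 ?addr0 //.
by move=> j /negPf; rewrite eq_sym => ->; rewrite scale0r.
Qed.

Definition kk l (v s : T l) : KK := Tagged TT (v, s).
Lemma bb_kk l v s : bb (kk v s) = c l v s. Proof. by []. Qed.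
Lemma kk_eq l (v s v' s' : T l) : (kk v s == kk v' s') = (v == v') && (s == s').
Proof. by rewrite /kk eq_Tagged. Qed.

Lemma coord_c l (v s : T l) k : coord (c l v s) k = (kk v s == k)%:R.
Proof. by rewrite -bb_kk coord_b. Qed.

Lemma coord_c_kk l (v s v' s' : T l) : coord (c l v s) (kk v' s') = ((v == v') && (s == s'))%:R.
Proof. by rewrite coord_c kk_eq. Qed.

Definition sub (P : pred L) x := forall k, ~~ P (projT1 k) -> coord x k = 0.

Lemma sub_lin (P : pred L) a x y : sub P x -> sub P y -> sub P (a *: x + y).
Proof. by move=> hx hy k hk; rewrite coord_lin hx // hy // mulr0 addr0. Qed.
Lemma sub0 (P : pred L) : sub P 0. Proof. by move=> k _; rewrite coord0. Qed.
Lemma subD (P : pred L) x y : sub P x -> sub P y -> sub P (x + y).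
Proof. by move=> hx hy k hk; rewrite coordD hx // hy // addr0. Qed.
Lemma subZ (P : pred L) a x : sub P x -> sub P (a *: x).
Proof. by move=> hx k hk; rewrite coordZ hx // mulr0. Qed.
Lemma subN (P : pred L) x : sub P x -> sub P (- x).
Proof. by move=> hx k hk; rewrite coordN hx // oppr0. Qed.
Lemma subB (P : pred L) x y : sub P x -> sub P y -> sub P (x - y).
Proof. by move=> hx hy; apply: subD => //; apply: subN. Qed.
Lemma sub_sum (P : pred L) (I : finType) (Q : pred I) (F : I -> A) :
  (forall j, Q j -> sub P (F j)) -> sub P (\sum_(j | Q j) F j).
Proof. by move=> H; apply: big_ind => //; [apply: sub0 | apply: subD]. Qed.
Lemma sub_b (P : pred L) k : P (projT1 k) -> sub P (bb k).
Proof.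
move=> Pk k' hk'; rewrite coord_b; case: eqP => // e; by rewrite -e Pk in hk'.
Qed.
Lemma sub_c (P : pred L) l (v s : T l) : P l -> sub P (c l v s).
Proof. by move=> Pl; rewrite -bb_kk; apply: sub_b. Qed.
Lemma sub_mono (P Q : pred L) x : (forall l, P l -> Q l) -> sub P x -> sub Q x.
Proof. by move=> PQ hx k hk; apply: hx; apply: contra hk; apply: PQ. Qed.

Lemma sub_decomp (P : pred L) x : sub P x -> x = \sum_(k | P (projT1 k)) coord x k *: bb k.
Proof.
move=> hx; rewrite {1}(coordE x) [LHS](bigID (fun k => P (projT1 k))) /=.
by rewrite [X in _ + X]big1 ?addr0 // => k /hx ->; rewrite scale0r.
Qed.

Definition gen (P : pred L) (y : A) := exists (m : L) (u v : T m), P m /\ y = c m u v.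

Lemma subP (P : pred L) x : sub P x <-> in_span (gen P) x.
Proof.
split.
  move=> /sub_decomp ->; apply: span_sum => k Pk; apply: spanZ; apply: span_sub.
  by exists (projT1 k), (projT2 k).1, (projT2 k).2.
apply: span_ind; [exact: sub0 | move=> *; exact: sub_lin |].
by move=> y [m [u [v [Pm ->]]]]; apply: sub_c.
Qed.

Definition upclosed (P : pred L) := forall l m, P l -> (l <= m)%O -> P m.

Lemma breve_sub (P : pred L) l x : upclosed P -> P l ->
  in_span (fun x => exists (m : L) (u v : T m), (l < m)%O /\ x = c m u v) x -> sub P x.
Proof.
move=> uP Pl /(subP (fun m => (l < m)%O)); apply: sub_mono => m lm.
by apply: (uP l) => //; apply: ltW.
Qed.

Lemma hmul l (s : T l) a : exists r : T l -> R, forall t,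
  sub (fun m => (l < m)%O) (a * c l s t - \sum_v r v *: c l v t).
Proof.
case: hc => _ H _; have [r Hr] := H l s a; exists r => t.
by apply/(subP (fun m => (l < m)%O)); apply: Hr.
Qed.

Lemma hinv l (s t : T l) : sub (fun m => (l < m)%O) (i (c l s t) - c l t s).
Proof. by case: hc => _ _ H; apply/(subP (fun m => (l < m)%O)); apply: H. Qed.

Lemma sub_mull (P : pred L) a x : upclosed P -> sub P x -> sub P (a * x).
Proof.
move=> uP /sub_decomp ->; rewrite mulr_sumr; apply: sub_sum => k Pk.
rewrite -scalerAr; apply: subZ.
case: k Pk => l [s t] /= Pl; rewrite /bb /=.
have [r Hr] := hmul s a.
rewrite -(subrK (\sum_v r v *: c l v t) (a * c l s t)); apply: subD.
  by apply: sub_mono (Hr t) => m lm; apply: (uP l) => //; apply: ltW.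
by apply: sub_sum => v _; apply: subZ; apply: sub_c.
Qed.

Lemma sub_inv (P : pred L) x : upclosed P -> sub P x -> sub P (i x).
Proof.
move=> uP /sub_decomp ->; rewrite (inv_sum hi); apply: sub_sum => k Pk.
rewrite (invZ hi); apply: subZ.
case: k Pk => l [s t] /= Pl; rewrite /bb /=.
rewrite -(subrK (c l t s) (i (c l s t))); apply: subD; last by apply: sub_c.
by apply: sub_mono (hinv s t) => m lm; apply: (uP l) => //; apply: ltW.
Qed.

Lemma sub_mulr (P : pred L) a x : upclosed P -> sub P x -> sub P (x * a).
Proof.
move=> uP hx; rewrite -[x * a](invK hi) (inv_mul hi); apply: sub_inv => //.
by apply: sub_mull => //; apply: sub_inv.
Qed.


Lemma sum_delta (I : finType) (F : I -> R) (j : I) : \sum_w F w * (w == j)%:R = F j.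
Proof.
rewrite (bigD1 j) //= eqxx mulr1 big1 ?addr0 // => w /negPf ->; by rewrite mulr0.
Qed.
Lemma sum_delta' (I : finType) (F : I -> R) (j : I) : \sum_w F w * (j == w)%:R = F j.
Proof. by under eq_bigr do rewrite eq_sym; apply: sum_delta. Qed.
Lemma natr_and (a b : bool) : (a && b)%:R = a%:R * b%:R :> R.
Proof. by case: a; case: b; rewrite ?mulr1 ?mulr0. Qed.
Lemma sum_ev (I : finType) (F : I -> R) : \sum_(p < #|I|) F (enum_val p) = \sum_w F w.
Proof. by rewrite -big_enum_val. Qed.

Lemma lin_ext (M : lmodType R) (P : pred L) (F1 F2 : A -> M) :
  (forall r x y, F1 (r *: x + y) = r *: F1 x + F1 y) ->
  (forall r x y, F2 (r *: x + y) = r *: F2 x + F2 y) ->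
  (forall k, P (projT1 k) -> F1 (bb k) = F2 (bb k)) ->
  forall x, sub P x -> F1 x = F2 x.
Proof.
move=> l1 l2 H x /sub_decomp ->.
have F0 (F : A -> M) : (forall r x y, F (r *: x + y) = r *: F x + F y) -> F 0 = 0.
  move=> lF; have h := lF 1 0 0; rewrite scale1r addr0 scale1r in h.
  by apply: (@addrI _ (F 0)); rewrite addr0 -h.
have FD (F : A -> M) : (forall r x y, F (r *: x + y) = r *: F x + F y) ->
    forall x y, F (x + y) = F x + F y.
  by move=> lF x1 y1; rewrite -[x1]scale1r lF !scale1r.
have FZ (F : A -> M) : (forall r x y, F (r *: x + y) = r *: F x + F y) ->
    forall r x, F (r *: x) = r *: F x.
  by move=> lF r x1; rewrite -[r *: x1]addr0 lF F0 // addr0.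
rewrite (big_morph F1 (FD _ l1) (F0 _ l1)) (big_morph F2 (FD _ l2) (F0 _ l2)).
by apply: eq_bigr => k Pk; rewrite FZ // FZ // H.
Qed.

Section Level.
Variable l : L.
Definition gtl := fun m => (l < m)%O.
Lemma up_gtl : upclosed gtl.
Proof. by move=> m m' lm mm'; apply: lt_le_trans lm mm'. Qed.

Definition eqm x y := sub gtl (x - y).
Lemma eqm_refl x : eqm x x. Proof. by rewrite /eqm subrr; apply: sub0. Qed.
Lemma eqm_sym x y : eqm x y -> eqm y x.
Proof. by rewrite /eqm => h; rewrite -opprB; apply: subN. Qed.
Lemma eqm_trans x y z : eqm x y -> eqm y z -> eqm x z.
Proof. by rewrite /eqm => h1 h2; rewrite -(subrK y x) -addrA; apply: subD. Qed.
Lemma eqmD x y x' y' : eqm x x' -> eqm y y' -> eqm (x + y) (x' + y').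
Proof. by rewrite /eqm => h1 h2; rewrite opprD addrACA; apply: subD. Qed.
Lemma eqmZ a x y : eqm x y -> eqm (a *: x) (a *: y).
Proof. by rewrite /eqm => h; rewrite -scalerBr; apply: subZ. Qed.
Lemma eqm_sum (I : finType) (F G : I -> A) :
  (forall j, eqm (F j) (G j)) -> eqm (\sum_j F j) (\sum_j G j).
Proof. by move=> H; rewrite /eqm -sumrB; apply: sub_sum => j _; apply: H. Qed.
Lemma eqm_mull a x y : eqm x y -> eqm (a * x) (a * y).
Proof. by rewrite /eqm => h; rewrite -mulrBr; apply: sub_mull h; apply: up_gtl. Qed.
Lemma eqm_inv x y : eqm x y -> eqm (i x) (i y).
Proof. by rewrite /eqm => h; rewrite -(invB hi); apply: sub_inv h; apply: up_gtl. Qed.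
Lemma eqm_coord x y (v s : T l) : eqm x y -> coord x (kk v s) = coord y (kk v s).
Proof.
move=> h; apply/eqP; rewrite -subr_eq0 -coordB; apply/eqP; apply: h.
by rewrite /gtl /= ltxx.
Qed.

Definition rr a (s v : T l) := coord (a * c l s s) (kk v s).

Lemma hmul2 a s t : eqm (a * c l s t) (\sum_v rr a s v *: c l v t).
Proof.
have [r Hr] := hmul s a.
have E v : r v = rr a s v.
  rewrite /rr (eqm_coord v s (Hr s)) coord_sum.
  under eq_bigr do rewrite coordZ coord_c_kk eqxx andbT.
  by rewrite sum_delta.
rewrite (eq_bigr (fun v => r v *: c l v t)) => [|v _]; [exact: Hr | by rewrite E].
Qed.

Lemma levL a s t v t' : coord (a * c l s t) (kk v t') = (t == t')%:R * rr a s v.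
Proof.
rewrite (eqm_coord v t' (hmul2 a s t)) coord_sum.
under eq_bigr do rewrite coordZ coord_c_kk natr_and mulrA.
by rewrite -big_distrl /= sum_delta mulrC.
Qed.

Lemma hinv2 s t : eqm (i (c l s t)) (c l t s).
Proof. exact: hinv. Qed.

Lemma levR a s t s' v : coord (c l s t * a) (kk s' v) = (s == s')%:R * rr (i a) t v.
Proof.
have e1 : eqm (c l s t * a) (\sum_w rr (i a) t w *: c l s w).
  rewrite -[c l s t * a](invK hi) (inv_mul hi).
  apply: eqm_trans (eqm_inv (eqm_trans (eqm_mull (i a) (hinv2 s t)) (hmul2 (i a) t s))) _.
  rewrite (inv_sum hi); apply: eqm_sum => w; rewrite (invZ hi); apply: eqmZ; apply: hinv2.
rewrite (eqm_coord s' v e1) coord_sum.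
under eq_bigr do rewrite coordZ coord_c_kk natr_and mulrCA.
by rewrite -mulr_sumr sum_delta.
Qed.

Definition nl := #|T l|.
Definition ev (p : 'I_nl) : T l := enum_val p.
Lemma ev_eq p q : (ev p == ev q) = (p == q).
Proof. by rewrite (inj_eq enum_val_inj). Qed.

Definition rho a : 'M[R]_nl := \matrix_(p, q) rr a (ev q) (ev p).
Definition fl x : 'M[R]_nl := \matrix_(p, q) coord x (kk (ev p) (ev q)).

Lemma fl_lin r x y : fl (r *: x + y) = r *: fl x + fl y.
Proof. by apply/matrixP => p q; rewrite !mxE coord_lin. Qed.

Lemma rho_rep : is_rep rho.
Proof.
split.
- move=> r x y; apply/matrixP => p q; rewrite !mxE /rr mulrDl -scalerAl coord_lin.
  by [].
- move=> x y; apply/matrixP => p q; rewrite !mxE /rr -mulrA.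
  rewrite (eqm_coord (ev p) (ev q) (eqm_mull x (hmul2 y (ev q) (ev q)))).
  rewrite mulr_sumr coord_sum.
  under eq_bigr do rewrite -scalerAr coordZ levL eqxx mul1r.
  rewrite -(sum_ev (fun w => rr y (ev q) w * rr x w (ev p))).
  by apply: eq_bigr => w _; rewrite !mxE mulrC.
- apply/matrixP => p q; rewrite !mxE /rr mul1r coord_c_kk eqxx andbT ev_eq eq_sym.
  by [].
Qed.

Definition netd (G : {set L}) := sub (fun m => m \in G).

Lemma up_ideal (G : {set L}) : order_ideal G -> upclosed (fun m => m \in G).
Proof. by move=> oG m m' hm hmm'; apply: oG hmm'. Qed.

Lemma sum2_delta n (F : 'I_n -> 'I_n -> R) p q :
  \sum_p' \sum_q' F p' q' * ((p' == p) && (q' == q))%:R = F p q.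
Proof.
rewrite -[RHS](sum_delta (fun p' => F p' q) p); apply: eq_bigr => p' _.
rewrite -(sum_delta (fun q' => F p' q' * (p' == p)%:R) q); apply: eq_bigr => q' _.
by rewrite natr_and mulrA.
Qed.

Lemma quot (G G' : {set L}) : order_ideal G -> order_ideal G' -> G \subset G' ->
  G' :\: G = [set l] -> quotient_iso i (netd G) (netd G') rho fl.
Proof.
move=> oG oG' sG E.
have : l \in G' :\: G by rewrite E set11.
rewrite inE => /andP[lG lG'].
have hm m : m \in G' -> m != l -> m \in G.
  move=> mG' ml; apply/negPn/negP => mG.
  have : m \in G' :\: G by rewrite inE mG mG'.
  by rewrite E inE (negPf ml).
have fl0 x : netd G x -> fl x = 0.
  by move=> hx; apply/matrixP => p q; rewrite !mxE; apply: hx.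
have uG := up_ideal oG.
have F2lin (M : 'M[R]_nl) : forall r x y, M *m fl (r *: x + y) = r *: (M *m fl x) + M *m fl y.
  by move=> r x y; rewrite fl_lin mulmxDr scalemxAr.
have F3lin (M : 'M[R]_nl) : forall r x y, fl (r *: x + y) *m M = r *: (fl x *m M) + fl y *m M.
  by move=> r x y; rewrite fl_lin mulmxDl scalemxAl.
split.
- by move=> r x y _ _; apply: fl_lin.
- move=> X; exists (\sum_p \sum_q X p q *: c l (ev p) (ev q)).
    by apply: sub_sum => p _; apply: sub_sum => q _; apply: subZ; apply: sub_c.
  apply/matrixP => p q; rewrite mxE coord_sum -[RHS](sum2_delta X p q).
  apply: eq_bigr => p' _; rewrite coord_sum; apply: eq_bigr => q' _.
  by rewrite coordZ coord_c_kk !ev_eq.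
- move=> x hx; split.
    move=> /matrixP H [m [v s]] /= mG; case: (boolP (m \in G')) => mG'; last by apply: hx.
    have ml : m = l.
      by apply/eqP; apply/negPn/negP => ml; rewrite (hm _ mG' ml) in mG.
    subst m; have := H (enum_rank v) (enum_rank s).
    by rewrite !mxE /ev !enum_rankK.
  by move=> H; apply/matrixP => p q; rewrite !mxE; apply: H.
- move=> a x hx; split.
    apply: (@lin_ext _ (fun m => m \in G') (fun x => fl (a * x)) (fun x => rho a *m fl x)) hx.
    + by move=> r x1 y; rewrite mulrDr -scalerAr fl_lin.
    + exact: F2lin.
    move=> [m [s t]] /= mG'; rewrite /bb /=.
    have [ml|ml] := eqVneq m l; last first.
      have h1 : netd G (c m s t) by apply: sub_c; apply: hm.
      have h2 : netd G (a * c m s t) by apply: sub_mull.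
      by rewrite (fl0 _ h1) (fl0 _ h2) mulmx0.
    subst m; apply/matrixP => p q; rewrite !mxE levL.
    under eq_bigr do rewrite !mxE coord_c_kk.
    rewrite (sum_ev (fun w => rr a w (ev p) * ((s == w) && (t == ev q))%:R)).
    under eq_bigr do rewrite natr_and mulrA.
    by rewrite -big_distrl /= sum_delta' mulrC.
  apply: (@lin_ext _ (fun m => m \in G') (fun x => fl (x * a)) (fun x => fl x *m (rho (i a))^T)) hx.
  + by move=> r x1 y; rewrite mulrDl -scalerAl fl_lin.
  + exact: F3lin.
  move=> [m [s t]] /= mG'; rewrite /bb /=.
  have [ml|ml] := eqVneq m l; last first.
    have h1 : netd G (c m s t) by apply: sub_c; apply: hm.
    have h2 : netd G (c m s t * a) by apply: sub_mulr.
    by rewrite (fl0 _ h1) (fl0 _ h2) mul0mx.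
  subst m; apply/matrixP => p q; rewrite !mxE levR.
  under eq_bigr do rewrite !mxE coord_c_kk.
  rewrite (sum_ev (fun w => ((s == ev p) && (t == w))%:R * rr (i a) w (ev q))).
  under eq_bigr do rewrite natr_and -mulrA.
  rewrite -big_distrr /=; under eq_bigr do rewrite mulrC; by rewrite sum_delta'.
- move=> x hx.
  apply: (@lin_ext _ (fun m => m \in G') (fun x => fl (i x)) (fun x => (fl x)^T)) hx.
  + by move=> r x1 y; rewrite (inv_lin hi) fl_lin.
  + by move=> r x1 y; apply/matrixP => p q; rewrite !mxE coord_lin.
  move=> [m [s t]] /= mG'; rewrite /bb /=.
  have [ml|ml] := eqVneq m l; last first.
    have h1 : netd G (c m s t) by apply: sub_c; apply: hm.
    have h2 : netd G (i (c m s t)) by apply: sub_inv.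
    by rewrite (fl0 _ h1) (fl0 _ h2) trmx0.
  subst m; apply/matrixP => p q; rewrite !mxE (eqm_coord _ _ (hinv2 s t)).
  by rewrite !coord_c_kk andbC.
Qed.
End Level.

Lemma dir1 : has_cell_net i L.
Proof.
exists netd; split.
- move=> G oG; have uG := up_ideal oG; split.
  + exact: sub0.
  + by move=> x y; apply: subD.
  + by move=> r x; apply: subZ.
  + by move=> a x hx; split; [apply: sub_mull | apply: sub_mulr].
  + by move=> x; apply: sub_inv.
- split.
    move=> x; split; last by move=> ->; apply: sub0.
    move=> /sub_decomp ->; rewrite big_pred0 // => k; by rewrite in_set0.
  move=> G1 G2 _ _ /subsetP s12 x; apply: sub_mono => m; exact: s12.
- move=> x; rewrite (coordE x); apply: span_sum => k _; apply: spanZ; apply: span_sub.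
  by exists (projT1 k); apply: sub_b; rewrite inE lexx.
- move=> l x; split.
    move=> /sub_decomp ->; apply: span_sum => k; rewrite inE => lk.
    apply: spanZ; apply: span_sub; exists (projT1 k) => //.
    by apply: sub_b; rewrite inE lexx.
  apply: span_ind; [exact: sub0 | by move=> *; apply: sub_lin |].
  move=> y [m lm hy]; apply: sub_mono hy => m'; rewrite !inE => mm'.
  exact: lt_le_trans lm mm'.
- move=> l; exists (nl l), (rho l); split; first exact: rho_rep.
  by move=> G G' oG oG' sG E; exists (fl l); apply: quot.
Qed.
End Dir1.

Set Implicit Arguments.
Set Implicit Arguments. Unset Strict Implicit. Unset Printing Implicit Defensive.
Import Order.TTheory GRing.Theory Num.Theory.
Local Open Scope ring_scope.

Notation cid := (@constructive_indefinite_description _ _).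

Section Ideal.
Variables (R : idomainType) (A : algType R) (i : A -> A) (I : A -> Prop)
  (hI : is_inv_ideal i I).
Lemma I0 : I 0. Proof. by case: hI. Qed.
Lemma ID x y : I x -> I y -> I (x + y). Proof. by case: hI => _ H _ _ _; apply: H. Qed.
Lemma IZ r x : I x -> I (r *: x). Proof. by case: hI => _ _ H _ _; apply: H. Qed.
Lemma IN x : I x -> I (- x). Proof. by move=> h; rewrite -scaleN1r; apply: IZ. Qed.
Lemma IB x y : I x -> I y -> I (x - y). Proof. by move=> h1 h2; apply: ID => //; apply: IN. Qed.
Lemma Imull a x : I x -> I (a * x). Proof. by case: hI => _ _ _ H _ h; case: (H a x h). Qed.
Lemma Imulr a x : I x -> I (x * a). Proof. by case: hI => _ _ _ H _ h; case: (H a x h). Qed.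
Lemma Iinv x : I x -> I (i x). Proof. by case: hI => _ _ _ _ H; apply: H. Qed.
Lemma Isum (J : finType) (P : pred J) (F : J -> A) :
  (forall j, P j -> I (F j)) -> I (\sum_(j | P j) F j).
Proof. by move=> H; apply: big_ind => //; [apply: I0 | apply: ID]. Qed.
Lemma Ispan (S : A -> Prop) x : (forall y, S y -> I y) -> in_span S x -> I x.
Proof.
move=> H; apply: span_ind => //; first exact: I0.
by move=> r x1 y h1 h2; apply: ID => //; apply: IZ.
Qed.
End Ideal.

Section QI.
Variables (R : idomainType) (A : algType R) (i : A -> A) (I I' : A -> Prop)
  (hI' : is_inv_ideal i I') (n : nat) (rho : A -> 'M[R]_n) (f : A -> 'M[R]_n)
  (hq : quotient_iso i I I' rho f).
Lemma qlin r x y : I' x -> I' y -> f (r *: x + y) = r *: f x + f y.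
Proof. by case: hq => H _ _ _ _; apply: H. Qed.
Lemma qf0 : f 0 = 0.
Proof.
have h := qlin 1 (I0 hI') (I0 hI'); rewrite scale1r addr0 scale1r in h.
by apply: (@addrI _ (f 0)); rewrite addr0 -h.
Qed.
Lemma qf_sum (J : finType) (P : pred J) (r : J -> R) (x : J -> A) :
  (forall j, P j -> I' (x j)) -> f (\sum_(j | P j) r j *: x j) = \sum_(j | P j) r j *: f (x j).
Proof.
move=> hx.
suff [] : I' (\sum_(j | P j) r j *: x j) /\ f (\sum_(j | P j) r j *: x j) = \sum_(j | P j) r j *: f (x j) by [].
apply: (big_rec2 (fun y1 y2 => I' y1 /\ f y1 = y2)).
  by split; [apply: (I0 hI') | apply: qf0].
move=> j y1 y2 Pj [h1 <-]; split; first by apply: (ID hI') => //; apply: (IZ hI'); apply: hx.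
by apply: qlin => //; apply: hx.
Qed.
Lemma qfB x y : I' x -> I' y -> f (x - y) = f x - f y.
Proof. by move=> h1 h2; rewrite -scaleN1r addrC qlin // addrC scaleN1r. Qed.
Lemma qker x : I' x -> f x = 0 -> I x.
Proof. by case: hq => _ _ H _ _ h; case: (H x h). Qed.
Lemma qkerE x : I' x -> I x -> f x = 0.
Proof. by case: hq => _ _ H _ _ h; case: (H x h). Qed.
Lemma qsurj X : exists2 x, I' x & f x = X.
Proof. by case: hq => _ H _ _ _; apply: H. Qed.
Lemma qmull a x : I' x -> f (a * x) = rho a *m f x.
Proof. by case: hq => _ _ _ H _ h; case: (H a x h). Qed.
Lemma qinv x : I' x -> f (i x) = (f x)^T.
Proof. by case: hq => _ _ _ _ H; apply: H. Qed.
End QI.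

Section Transfer.
Variables (R : idomainType) (A : lmodType R) (K : finType) (b d : K -> A).
Hypotheses (hbs : forall x, exists r : K -> R, x = \sum_k r k *: b k)
  (hds : forall x, exists r : K -> R, x = \sum_k r k *: d k)
  (hdi : forall r : K -> R, \sum_k r k *: d k = 0 -> forall k, r k = 0).

Lemma combine (a : K -> R) (M : K -> K -> R) (e : K -> A) :
  \sum_j a j *: \sum_m M j m *: e m = \sum_m (\sum_j a j * M j m) *: e m.
Proof.
under eq_bigr do rewrite scaler_sumr.
rewrite exchange_big /=; apply: eq_bigr => m _; rewrite scaler_suml.
by apply: eq_bigr => j _; rewrite scalerA.
Qed.

Lemma transfer (r : K -> R) : \sum_k r k *: b k = 0 -> forall k, r k = 0.
Proof.
pose Q k := proj1_sig (cid (hbs (d k))).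
have Qs k : d k = \sum_j Q k j *: b j := proj2_sig (cid (hbs (d k))).
pose P j := proj1_sig (cid (hds (b j))).
have Ps j : b j = \sum_m P j m *: d m := proj2_sig (cid (hds (b j))).
have QP k m : \sum_j Q k j * P j m = (k == m)%:R.
  apply/eqP; rewrite -subr_eq0; apply/eqP; move: m.
  apply: (@hdi (fun m => \sum_j Q k j * P j m - (k == m)%:R)).
  under eq_bigr do rewrite scalerBl.
  rewrite sumrB -combine.
  rewrite (eq_bigr (fun j => Q k j *: b j)); last by move=> j _; rewrite -Ps.
  rewrite -Qs (bigD1 k) //= eqxx scale1r big1 ?addr0 ?subrr //.
  by move=> j /negPf; rewrite eq_sym => ->; rewrite scale0r.
pose Qm : 'M[R]_#|K| := \matrix_(a, c) Q (enum_val a) (enum_val c).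
pose Pm : 'M[R]_#|K| := \matrix_(a, c) P (enum_val a) (enum_val c).
have QPm : Qm *m Pm = 1%:M.
  apply/matrixP => a c; rewrite !mxE.
  under eq_bigr do rewrite !mxE.
  rewrite (sum_ev (fun j => Q (enum_val a) j * P j (enum_val c))) QP.
  by rewrite (inj_eq enum_val_inj).
have PQm := mulmx1C QPm.
have PQ j m : \sum_k P j k * Q k m = (j == m)%:R.
  move/matrixP: PQm => /(_ (enum_rank j) (enum_rank m)); rewrite !mxE.
  under eq_bigr do rewrite !mxE enum_rankK.
  rewrite enum_rankK (sum_ev (fun k => P j k * Q k m)) => ->.
  by rewrite (inj_eq enum_rank_inj).
move=> hr.
have hz m : \sum_j r j * P j m = 0.
  move: m; apply: hdi; rewrite -combine -[RHS]hr.
  by apply: eq_bigr => j _; rewrite -Ps.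
move=> k; rewrite -(sum_delta r k).
under eq_bigr do rewrite -PQ mulr_sumr.
rewrite exchange_big /= big1 // => m _.
rewrite (eq_bigr (fun j => r j * P j m * Q m k)); last by move=> j _; rewrite mulrA.
by rewrite -big_distrl /= hz mul0r.
Qed.
End Transfer.

Section Dir2.
Variables (R : idomainType) (A : algType R) (i : A -> A) (hi : is_involution i)
  (d : Order.disp_t) (L : finPOrderType d) (net : {set L} -> A -> Prop)
  (hn : is_cell_net i net).

Definition geS (l : L) := [set m : L | (l <= m)%O].
Definition gtS (l : L) := [set m : L | (l < m)%O].

Lemma hid G : order_ideal G -> is_inv_ideal i (net G). Proof. by case: hn => H _ _ _ _; apply: H. Qed.
Lemma h0 x : net set0 x <-> x = 0. Proof. by case: hn => _ [H _] _ _ _. Qed.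
Lemma hmono G1 G2 : order_ideal G1 -> order_ideal G2 -> G1 \subset G2 -> forall x, net G1 x -> net G2 x.
Proof. by case: hn => _ [_ H] _ _ _; apply: H. Qed.
Lemma hspanA x : in_span (fun y => exists m : L, net (geS m) y) x.
Proof. by case: hn => _ _ H _ _. Qed.
Lemma hgt l x : net (gtS l) x <-> in_span (fun y => exists2 m : L, (l < m)%O & net (geS m) y) x.
Proof. by case: hn => _ _ _ H _; apply: H. Qed.
Lemma h3 l : exists (n : nat) (rho : A -> 'M[R]_n), is_rep rho /\
          forall G G', order_ideal G -> order_ideal G' -> G \subset G' ->
            G' :\: G = [set l] ->
            exists f : A -> 'M[R]_n, quotient_iso i (net G) (net G') rho f.
Proof. by case: hn => _ _ _ _ H; apply: H. Qed.

Lemma oi_ge l : order_ideal (geS l).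
Proof. by move=> m m'; rewrite !inE => h1 h2; apply: le_trans h1 h2. Qed.
Lemma oi_gt l : order_ideal (gtS l).
Proof. by move=> m m'; rewrite !inE => h1 h2; apply: lt_le_trans h1 h2. Qed.
Lemma oi_setT : order_ideal [set: L]. Proof. by move=> m m'; rewrite !inE. Qed.
Lemma gt_ge l : gtS l \subset geS l.
Proof. by apply/subsetP => m; rewrite !inE; apply: ltW. Qed.
Lemma ge_gt l : geS l :\: gtS l = [set l].
Proof.
apply/setP => m; rewrite !inE lt_def.
by case: (m =P l) => [->|_]; rewrite ?lexx //= ?andNb.
Qed.

Arguments oi_ge : clear implicits.
Arguments oi_gt : clear implicits.
Definition nn l : nat := proj1_sig (cid (h3 l)).
Definition nn_spec l := proj2_sig (cid (h3 l)).
Definition rh l : A -> 'M[R]_(nn l) := proj1_sig (cid (nn_spec l)).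
Definition rh_spec l := proj2_sig (cid (nn_spec l)).
Lemma ff_ex l : exists f : A -> 'M[R]_(nn l), quotient_iso i (net (gtS l)) (net (geS l)) (rh l) f.
Proof. exact: (rh_spec l).2 _ _ (oi_gt l) (oi_ge l) (@gt_ge l) (@ge_gt l). Qed.
Definition ff l := proj1_sig (cid (ff_ex l)).
Lemma ff_spec l : quotient_iso i (net (gtS l)) (net (geS l)) (rh l) (ff l).
Proof. exact: proj2_sig (cid (ff_ex l)). Qed.
Lemma lift_ex l (s t : 'I_(nn l)) : exists x, net (geS l) x /\ ff l x = delta_mx s t.
Proof. by have [x h1 h2] := qsurj (ff_spec l) (delta_mx s t); exists x. Qed.
Definition cc l (s t : 'I_(nn l)) : A := proj1_sig (cid (lift_ex s t)).
Lemma cc_ge l (s t : 'I_(nn l)) : net (geS l) (cc s t).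
Proof. exact: (proj2_sig (cid (lift_ex s t))).1. Qed.
Lemma ff_cc l (s t : 'I_(nn l)) : ff l (cc s t) = delta_mx s t.
Proof. exact: (proj2_sig (cid (lift_ex s t))).2. Qed.

Definition gen2 (P : pred L) (y : A) := exists (m : L) (u v : 'I_(nn m)), P m /\ y = cc u v.

Lemma span_ge m x : net (geS m) x -> in_span (gen2 (fun m' => (m <= m')%O)) x.
Proof.
have [k] := ubnP #|gtS m|; elim: k m x => // k IH m x hk hx.
have hI := hid (oi_ge m).
set y := \sum_(p : 'I_(nn m) * 'I_(nn m)) ff m x p.1 p.2 *: cc p.1 p.2.
have hy : net (geS m) y by apply: (Isum hI) => // p _; apply: (IZ hI) => //; apply: cc_ge.
have fy : ff m (x - y) = 0.
  rewrite (qfB (ff_spec m)) // (qf_sum hI (ff_spec m)); last by move=> p _; apply: cc_ge.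
  under eq_bigr do rewrite ff_cc.
  by rewrite -(pair_bigA _ (fun s t => ff m x s t *: delta_mx s t)) /= -matrix_sum_delta subrr.
have := qker (ff_spec m) (IB hI hx hy) fy => /hgt hz.
rewrite -(subrK y x); apply: spanD.
  apply: span_span hz => z [m' mm' hz].
  have hk' : (#|gtS m'| < k)%N.
    move: hk; rewrite ltnS => hk; apply: (leq_trans _ hk); apply: proper_card; apply/properP; split.
      by apply/subsetP => u; rewrite !inE => h; apply: lt_trans mm' h.
    by exists m'; rewrite !inE ?ltxx.
  apply: span_span (IH m' z hk' hz) => w [u [a [b [hu ->]]]].
  by apply: span_sub; exists u, a, b; split => //; apply: le_trans (ltW mm') hu.
apply: span_sum => p _; apply: spanZ; apply: span_sub.
by exists m, p.1, p.2; split.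
Qed.

Definition breve2 l := in_span (fun x => exists (m : L) (u v : 'I_(nn m)), (l < m)%O /\ x = cc u v).

Lemma gt_breve l x : net (gtS l) x -> breve2 l x.
Proof.
move=> /hgt; apply: span_span => z [m lm hz].
apply: span_span (span_ge hz) => w [u [a [b [hu ->]]]].
by apply: span_sub; exists u, a, b; split => //; apply: lt_le_trans lm hu.
Qed.

Lemma datum_inv l (s t : 'I_(nn l)) : breve2 l (i (cc s t) - cc t s).
Proof.
have hI := hid (oi_ge l).
apply: gt_breve; apply: (qker (ff_spec l)); first by apply: (IB hI) => //; [apply: (Iinv hI)|]; apply: cc_ge.
rewrite (qfB (ff_spec l)); [|by apply: (Iinv hI); apply: cc_ge | by apply: cc_ge].
rewrite (qinv (ff_spec l)); last exact: cc_ge.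
by rewrite !ff_cc trmx_delta subrr.
Qed.

Lemma datum_mul l (s : 'I_(nn l)) a : exists r : 'I_(nn l) -> R, forall t,
  breve2 l (a * cc s t - \sum_v r v *: cc v t).
Proof.
have hI := hid (oi_ge l).
exists (fun v => rh l a v s) => t.
apply: gt_breve; apply: (qker (ff_spec l)).
  by apply: (IB hI) => //; [apply: (Imull hI); apply: cc_ge | apply: (Isum hI) => v _; apply: (IZ hI); apply: cc_ge].
rewrite (qfB (ff_spec l)); [|by apply: (Imull hI); apply: cc_ge | by apply: (Isum hI) => v _; apply: (IZ hI); apply: cc_ge].
rewrite (qf_sum hI (ff_spec l)); last by move=> v _; apply: cc_ge.
rewrite (qmull (ff_spec l)); last exact: cc_ge.
rewrite ff_cc; apply/eqP; rewrite subr_eq0; apply/eqP.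
apply/matrixP => p q; rewrite !mxE summxE.
under eq_bigr do rewrite !mxE natr_and mulrA.
under [RHS]eq_bigr do rewrite ff_cc !mxE natr_and mulrA.
by rewrite -!big_distrl /= sum_delta sum_delta'.
Qed.


Definition KK2 := {l : L & ('I_(nn l) * 'I_(nn l))%type}.
Definition bb2 (k : KK2) : A := cc (projT2 k).1 (projT2 k).2.

Lemma span_all x : exists r : KK2 -> R, x = \sum_k r k *: bb2 k.
Proof.
have hx : in_span (gen2 predT) x.
  apply: span_span (hspanA x) => y [m hy]; apply: span_span (span_ge hy).
  by move=> z [u [a [b [_ ->]]]]; apply: span_sub; exists u, a, b.
move: x hx; apply: span_ind.
- by exists (fun _ => 0); rewrite big1 // => k _; rewrite scale0r.
- move=> a x y [r1 ->] [r2 ->]; exists (fun k => a * r1 k + r2 k).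
  rewrite scaler_sumr -big_split /=; apply: eq_bigr => k _.
  by rewrite scalerDl scalerA.
- move=> y [m [u [v [_ ->]]]]; exists (fun k => (k == Tagged _ (u, v))%:R).
  rewrite (bigD1 (Tagged _ (u, v))) //= eqxx scale1r big1 ?addr0 //.
  by move=> k /negPf ->; rewrite scale0r.
Qed.

Definition TT2 (l : L) : finType := ('I_(nn l) * 'I_(nn l))%type.
Definition tg (l : L) (p : 'I_(nn l) * 'I_(nn l)) : KK2 :=
  existT (fun j => ('I_(nn j) * 'I_(nn j))%type) l p.

Lemma fiber (V : zmodType) (F : KK2 -> V) (lam : L) :
  \sum_(k | projT1 k == lam) F k = \sum_(p : 'I_(nn lam) * 'I_(nn lam)) F (tg p).
Proof.
transitivity (\sum_(j | j == lam) \sum_(p : TT2 j) F (tg p)); last first.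
  by rewrite big_pred1_eq.
rewrite (sig_big_dep (J := TT2) (fun j => j == lam) (fun _ _ => true) (fun j p => F (tg p))) /=.
by apply: eq_big => [k|k _]; [rewrite andbT | case: k].
Qed.

Lemma basis_ideal G : order_ideal G -> exists dd : KK2 -> A,
  [/\ forall k, projT1 k \in G -> net G (dd k),
      forall x, net G x -> exists r : KK2 -> R, x = \sum_(k | projT1 k \in G) r k *: dd k &
      forall r : KK2 -> R, \sum_(k | projT1 k \in G) r k *: dd k = 0 ->
         forall k, projT1 k \in G -> r k = 0].
Proof.
have [n] := ubnP #|G|; elim: n G => // n IH G hG oG.
have [->|/set0Pn [x0 x0G]] := eqVneq G set0.
  exists (fun _ => 0); split.
  - by move=> k; rewrite in_set0.
  - by move=> x /h0 ->; exists (fun _ => 0); rewrite big1 // => k _; rewrite scaler0.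
  - by move=> r _ k; rewrite in_set0.
pose lam := [arg min_(x < x0 in G) #|[set m in G | (m < x)%O]|].
have [lamG lammin] : lam \in G /\ forall m, m \in G -> ~~ (m < lam)%O.
  rewrite /lam; case: arg_minnP => // l lG Hl; split => // m mG; apply/negP => ml.
  have := Hl m mG; rewrite leqNgt => /negP; apply; apply: proper_card; apply/properP; split.
    by apply/subsetP => u; rewrite !inE => /andP[uG um]; rewrite uG (lt_trans um ml).
  by exists m; rewrite !inE ?mG ?ml ?ltxx.
pose G0 := G :\ lam.
have oG0 : order_ideal G0.
  move=> y z; rewrite !inE => /andP[yl yG] yz; apply/andP; split; last exact: oG yz.
  apply/negP => /eqP zl; rewrite zl in yz.
  by have := lammin y yG; rewrite lt_def eq_sym yl yz.
have sG0 : G0 \subset G by apply: subD1set.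
have E : G :\: G0 = [set lam].
  apply/setP => u; rewrite !inE; case: (u =P lam) => [->|]; first by rewrite lamG.
  by rewrite /=; case: (u \in G).
have hG0 : (#|G0| < n)%N by move: hG; rewrite (cardsD1 lam G) lamG add1n ltnS.
have [dd0 [m0 s0 i0]] := IH G0 hG0 oG0.
have [f hf] := (rh_spec lam).2 G0 G oG0 oG sG0 E.
have hI := hid oG; have hI0 := hid oG0.
have gex (p : 'I_(nn lam) * 'I_(nn lam)) : exists x, net G x /\ f x = delta_mx p.1 p.2.
  by have [x h1 h2] := qsurj hf (delta_mx p.1 p.2); exists x.
pose g p := proj1_sig (cid (gex p)).
have gG p : net G (g p) := (proj2_sig (cid (gex p))).1.
have fg p : f (g p) = delta_mx p.1 p.2 := (proj2_sig (cid (gex p))).2.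
pose dd k := untag (dd0 k) g k.
have ddE1 p : dd (tg p) = g p.
  by rewrite /dd /untag /=; case: eqP => // e; rewrite (eq_axiomK e).
have ddE2 k : projT1 k != lam -> dd k = dd0 k by move=> h; apply: untag_dflt.
have splitG (V : zmodType) (F : KK2 -> V) : \sum_(k | projT1 k \in G) F k =
    \sum_(k | projT1 k == lam) F k + \sum_(k | projT1 k \in G0) F k.
  rewrite (bigID (fun k => projT1 k == lam)) /=; congr (_ + _); apply: eq_bigl => k.
    by case: eqP => [->|]; rewrite ?lamG ?andbF.
  by rewrite !inE andbC.
have hmem k : projT1 k \in G -> net G (dd k).
  case: k => m p /= mG; have [ml|ml] := eqVneq m lam.
    by subst m; rewrite ddE1.
  rewrite ddE2 //; apply: (hmono oG0 oG sG0); apply: m0; by rewrite !inE ml.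
exists dd; split => //.
- move=> x hx.
  pose S := \sum_(p : 'I_(nn lam) * 'I_(nn lam)) f x p.1 p.2 *: g p.
  have hS : net G S by apply: (Isum hI) => p _; apply: (IZ hI).
  have fS : f (x - S) = 0.
    rewrite (qfB hf) // (qf_sum hI hf); last by move=> p _.
    under eq_bigr do rewrite fg.
    by rewrite -(pair_bigA _ (fun s t => f x s t *: delta_mx s t)) /= -matrix_sum_delta subrr.
  have := qker hf (IB hI hx hS) fS => /s0 [r0 e0].
  exists (fun k => untag (r0 k) (fun p => f x p.1 p.2) k).
  rewrite splitG fiber.
  have untag1 (T0 : Type) (h : KK2 -> T0) (F : 'I_(nn lam) * 'I_(nn lam) -> T0) p :
      untag (h (tg p)) F (tg p) = F p.
    by rewrite /untag /=; case: eqP => // e; rewrite (eq_axiomK e).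
  under eq_bigr do rewrite untag1 ddE1.
  rewrite (eq_bigr (fun k => r0 k *: dd0 k)); last first.
    move=> k; rewrite !inE => /andP[kl _] /=; rewrite ddE2 // /untag; case: eqP => [e|//]; exfalso; move: kl; rewrite /tag in e; by rewrite e eqxx.
  by rewrite -e0 addrC subrK.
- move=> r hr.
  have hr1 (p : 'I_(nn lam) * 'I_(nn lam)) : r (tg p) = 0.
    have := congr1 f hr; rewrite (qf_sum hI hf); last by move=> k; apply: hmem.
    rewrite (qf0 hI hf) splitG fiber.
    rewrite (eq_bigr (fun k => r k *: 0) (P := fun k => projT1 k \in G0)); last first.
      move=> k; rewrite !inE => /andP[kl kG]; rewrite ddE2 //; congr (_ *: _).
      by apply: (qkerE hf); [apply: (hmono oG0 oG sG0) |]; apply: m0; rewrite !inE kl.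
    rewrite [X in _ + X]big1 ?addr0; last by move=> k _; rewrite scaler0.
    under eq_bigr do rewrite ddE1 fg.
    move/matrixP => /(_ p.1 p.2); rewrite summxE !mxE.
    rewrite (bigD1 p) //= !mxE !eqxx mulr1 big1 ?addr0 // => q; case: q => a b.
    case: p => s t /=; rewrite xpair_eqE => hq; rewrite !mxE [s == a]eq_sym [t == b]eq_sym.
    by rewrite (negPf hq) mulr0.
  have hr0 : \sum_(k | projT1 k \in G0) r k *: dd0 k = 0.
    move: hr; rewrite splitG fiber big1 ?add0r; last by move=> p _; rewrite hr1 scale0r.
    move=> h; rewrite -[RHS]h; apply: eq_bigr => k; rewrite !inE => /andP[kl _]; by rewrite ddE2.
  move=> [m p] /= mG; have [ml|ml] := eqVneq m lam.
    by subst m; apply: hr1.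
  by apply: (i0 r hr0); rewrite !inE ml.
Qed.


Lemma all_setT x : net [set: L] x.
Proof.
have hI := hid oi_setT.
apply: (Ispan hI) (hspanA x) => y [m hy].
by apply: (hmono (oi_ge m) oi_setT) hy; apply: subsetT.
Qed.

Lemma dir2 : has_cell_datum i L.
Proof.
have [dd [_ dspan dind]] := basis_ideal oi_setT.
exists (fun l => ('I_(nn l) : finType)), (fun l => @cc l); split.
- split; first by move=> x; apply: span_all.
  apply: (@transfer _ _ _ bb2 dd).
  + exact: span_all.
  + move=> x; have [r ->] := dspan x (all_setT x); exists r.
    by apply: eq_bigl => k; rewrite in_setT.
  + move=> r hr k.
    have h : \sum_(j | projT1 j \in [set: L]) r j *: dd j = 0.
      by rewrite -[RHS]hr; apply: eq_bigl => j; rewrite in_setT.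
    by apply: (dind r h k); rewrite in_setT.
- by move=> l s a; apply: datum_mul.
- by move=> l s t; apply: datum_inv.
Qed.
End Dir2.

Theorem mainTheorem2 (R : idomainType) (A : algType R) (i : A -> A)
    (hi : is_involution i) (d : Order.disp_t) (L : finPOrderType d) :
  has_cell_datum i L <-> has_cell_net i L.
Proof.
split.
  by move=> [T [c hc]]; exact: (@dir1 R A i hi d L T c hc).
by move=> [net hn]; exact: (dir2 hn).
Qed.
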